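(* Let $X,a,b$ be variables, let $C_k=\frac1{k+1}\binom{2k}{k}$ denote the Catalan numbers, and let $U_n(x)$ be the Chebyshev polynomials of the second kind, defined by $\sum_{n\ge0}U_n(x)z^n=\frac1{1-2xz+z^2}$, with $U_{-1}(x)=0$. Then for all positive integers $n$, $$\det_{0\le i,j\le n-1}\left(X(-2a)^{i+j+1}+\sum_{k=0}^{\lfloor(i+j)/2\rfloor}(-2a)^{i+j-2k}C_k-b\Big(X(-2a)^{i+j}+\sum_{k=0}^{\lfloor(i+j-1)/2\rfloor}(-2a)^{i+j-2k-1}C_k\Big)\right)$$ $$=U_{n-1}(b/2)\big(XU_n(-a)+U_{n-1}(-a)\big)-U_n(b/2)\big(XU_{n-1}(-a)+U_{n-2}(-a)\big).$$
   Context: An empty sum equals $0$. *)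

(* Defs.v *)
From HB Require Import structures.
From mathcomp Require Import all_boot all_order all_algebra.
Set Implicit Arguments. Unset Strict Implicit. Unset Printing Implicit Defensive.
Import Order.TTheory GRing.Theory Num.Theory.
Local Open Scope ring_scope.

Definition catalan (k : nat) : nat := ('C(k.*2, k) %/ k.+1)%N.

(* Chebyshev polynomials of the second kind evaluated at x, via the
   recurrence equivalent to sum_n U_n(x) z^n = 1/(1 - 2xz + z^2):
   U_0 = 1, U_1 = 2x, U_{n+2} = 2x U_{n+1} - U_n. *)
Fixpoint chebU_pair {R : ringType} (x : R) (n : nat) : R * R :=
  match n with
  | 0 => (1, 2%:R * x)
  | m.+1 => let p := chebU_pair x m in (p.2, 2%:R * x * p.2 - p.1)
  end.

Definition chebU {R : ringType} (n : nat) (x : R) : R := (chebU_pair x n).1.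

(* chebUm1 n x = U_{n-1}(x), with the convention U_{-1}(x) = 0. *)
Definition chebUm1 {R : ringType} (n : nat) (x : R) : R :=
  if n is k.+1 then chebU k x else 0.

(* Main.v *)
Require Import Defs.
From HB Require Import structures.
From mathcomp Require Import all_boot all_order all_algebra.
From mathcomp Require Import ring lra zify.
Set Implicit Arguments. Unset Strict Implicit. Unset Printing Implicit Defensive.
Import Order.TTheory GRing.Theory Num.Theory.
Local Open Scope ring_scope.

Definition Lf (R : fieldType) (s : nat -> R) (q : {poly R}) : R :=
  \sum_(k < size q) q`_k * s k.

Lemma Lf_widen (R : fieldType) (s : nat -> R) (q : {poly R}) N :
  (size q <= N)%N -> Lf s q = \sum_(k < N) q`_k * s k.
Proof.
move=> h; rewrite /Lf -(subnKC h) big_split_ord /=.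
rewrite [X in _ + X]big1 ?addr0 // => k _.
by rewrite nth_default ?mul0r //= leq_addr.
Qed.

Lemma Lf_add (R : fieldType) (s : nat -> R) (p q : {poly R}) : Lf s (p + q) = Lf s p + Lf s q.
Proof.
rewrite (Lf_widen s (size_polyD p q)) (Lf_widen s (leq_maxl (size p) (size q))).
rewrite (Lf_widen s (leq_maxr (size p) (size q))) -big_split /=.
by apply: eq_bigr => k _; rewrite coefD mulrDl.
Qed.

Lemma Lf_scale (R : fieldType) (s : nat -> R) a (p : {poly R}) : Lf s (a *: p) = a * Lf s p.
Proof.
rewrite (Lf_widen s (size_scale_leq a p)) /Lf mulr_sumr.
by apply: eq_bigr => k _; rewrite coefZ mulrA.
Qed.

Lemma Lf0 (R : fieldType) (s : nat -> R) : Lf s 0 = 0.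
Proof. by rewrite /Lf size_poly0 big_ord0. Qed.

Lemma Lf_sub (R : fieldType) (s : nat -> R) (p q : {poly R}) : Lf s (p - q) = Lf s p - Lf s q.
Proof. by rewrite -scaleN1r Lf_add Lf_scale mulN1r. Qed.

Lemma Lf_sum (R : fieldType) (s : nat -> R) m (F : 'I_m -> {poly R}) :
  Lf s (\sum_(i < m) F i) = \sum_(i < m) Lf s (F i).
Proof. exact: (big_morph (Lf s) (Lf_add s) (Lf0 s)). Qed.

Lemma Lf_Xn (R : fieldType) (s : nat -> R) k : Lf s 'X^k = s k.
Proof.
rewrite /Lf size_polyXn big_ord_recr /= big1 ?add0r.
  by rewrite coefXn eqxx mul1r.
by move=> i _; rewrite coefXn ltn_eqF ?mul0r.
Qed.

Lemma poly_expN (R : fieldType) (q : {poly R}) N :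
  (size q <= N)%N -> q = \sum_(k < N) q`_k *: 'X^k.
Proof.
move=> hq; rewrite -poly_def; apply/polyP => k; rewrite coef_poly.
by case: ltnP => // h; rewrite nth_default // (leq_trans hq h).
Qed.

Lemma Lf_shiftX (R : fieldType) (s : nat -> R) (q : {poly R}) :
  Lf s ('X * q) = Lf (fun k => s k.+1) q.
Proof.
rewrite {1}(@poly_expN _ q (size q)) // mulr_sumr Lf_sum [in RHS]/Lf.
by apply: eq_bigr => k _; rewrite -scalerAr -exprS Lf_scale Lf_Xn.
Qed.

Definition monicdeg (R : fieldType) (q : {poly R}) i :=
  forall k, (i <= k)%N -> q`_k = (i == k)%:R.

Lemma md_size (R : fieldType) (q : {poly R}) i : monicdeg q i -> (size q <= i.+1)%N.
Proof.
move=> hq; apply/leq_sizeP => j hj.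
by rewrite hq ?(ltnW hj) // ltn_eqF.
Qed.
Lemma det_rank1 (R : comNzRingType) n (u : 'cV[R]_n) (v : 'rV[R]_n) :
  \det (1%:M + u *m v) = 1 + (v *m u) 0 0.
Proof.
have E1 : block_mx 1%:M 0 (-v) 1%:M *m block_mx 1%:M u 0 (1%:M + v *m u)
        = block_mx (1%:M + u *m v) u 0 1%:M *m block_mx 1%:M 0 (-v) 1%:M.
  rewrite !mulmx_block !mulmx1 !mul1mx !mulmx0 !mul0mx !addr0 !add0r.
  rewrite mulNmx mulmxN addrA addrK; congr block_mx; by rewrite addrAC addNr add0r.
have := congr1 determinant E1.
rewrite !det_mulmx !det_lblock !det_ublock !det1 !mul1r !mulr1.
by move=> <-; rewrite det_mx11 !mxE eqxx.
Qed.
Definition ee (R : fieldType) (k : nat) : R := if odd k then 0 else (catalan k./2)%:R.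

Definition lam (R : fieldType) (X c : R) (N : nat) : R :=
  X * c ^+ N + \sum_(k < N.+1./2) c ^+ (N.-1 - k.*2) * (catalan k)%:R.

Lemma lamS (R : fieldType) (X c : R) N : lam X c N.+1 = c * lam X c N + ee R N.
Proof.
have := odd_double_half N; rewrite /ee; case: (odd N) => /=; move: (N./2) => m <-.
  rewrite add1n /lam addr0.
  have h1 : ((m.*2).+3)./2 = m.+1 by rewrite -[(m.*2).+3]/(true + (m.+1).*2)%N half_bit_double.
  have h2 : ((m.*2).+2)./2 = m.+1 by rewrite -[(m.*2).+2]/((m.+1).*2) doubleK.
  rewrite h1 h2 mulrDr mulr_sumr; congr (_ + _); first by rewrite exprS mulrCA.
  apply: eq_bigr => k _; rewrite mulrA -exprS; congr (_ ^+ _ * _).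
  have := ltn_ord k; rewrite -!addnn; lia.
rewrite add0n /lam.
have h1 : ((m.*2).+2)./2 = m.+1 by rewrite -[(m.*2).+2]/((m.+1).*2) doubleK.
have h2 : ((m.*2).+1)./2 = m by rewrite -[(m.*2).+1]/(true + m.*2)%N half_bit_double.
rewrite h1 h2 big_ord_recr subnn expr0 mul1r mulrDr mulr_sumr addrA.
congr (_ + _ + _); first by rewrite exprS mulrCA.
apply: eq_bigr => k _; rewrite mulrA -exprS; congr (_ ^+ _ * _).
have := ltn_ord k; rewrite /= -!addnn; lia.
Qed.

Lemma catalanE (R : fieldType) m :
  (catalan m)%:R = ('C(m.*2, m))%:R - ('C(m.*2, m.+1))%:R :> R.
Proof.
have h := mul_bin_left m.*2 m.
have e : (m.*2 - m = m)%N by rewrite -addnn addnK.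
rewrite e in h.
have hle : ('C(m.*2, m.+1) <= 'C(m.*2, m))%N by nia.
have hc : 'C(m.*2, m) = (('C(m.*2, m) - 'C(m.*2, m.+1)) * m.+1)%N by nia.
by rewrite /catalan {1}hc mulnK // natrB.
Qed.

Definition bal (R : fieldType) (k i : nat) : R :=
  if odd (k + i) then 0 else ('C(k, (k + i)./2))%:R - ('C(k, ((k + i)./2).+1))%:R.

Lemma bal_rec (R : fieldType) k i : bal R k i.+2 = bal R k.+1 i.+1 - bal R k i.
Proof.
rewrite /bal !addnS !addSn /= negbK.
case: (odd (k + i)); first by rewrite subr0.
rewrite !binS !natrD; ring.
Qed.

Lemma bal_0 (R : fieldType) k : bal R k 0 = ee R k.
Proof.
rewrite /bal /ee addn0.
have := odd_double_half k; case: (odd k) => //=; move: (k./2) => m <-.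
by rewrite catalanE.
Qed.

Lemma bal_1 (R : fieldType) k : bal R k 1 = ee R k.+1.
Proof.
rewrite /bal /ee addn1 /=.
have := odd_double_half k; case: (odd k) => //=; move: (k./2) => m <-.
rewrite add1n.
have h1 : uphalf (m.*2).+1 = m.+1 by exact: (doubleK m.+1).
rewrite h1 catalanE doubleS.
have E1 : 'C((m.*2).+2, m.+1) = ('C((m.*2).+1, m.+1) + 'C((m.*2).+1, m))%N := binS _ _.
have E2 : 'C((m.*2).+2, m.+2) = ('C((m.*2).+1, m.+2) + 'C((m.*2).+1, m.+1))%N := binS _ _.
have e : 'C((m.*2).+1, m) = 'C((m.*2).+1, m.+1).
  rewrite -(@bin_sub (m.*2).+1 m.+1); last by rewrite -addnn; lia.
  have -> : ((m.*2).+1 - m.+1 = m)%N by rewrite -addnn; lia.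
  by [].
rewrite E1 E2 e !natrD; ring.
Qed.

Lemma bal_lt (R : fieldType) k i : (k < i)%N -> bal R k i = 0.
Proof.
move=> hki; rewrite /bal; case: ifP => // hodd.
have := odd_double_half (k + i); rewrite hodd /= => h.
have hu : (k < (k + i)./2)%N by move: h; rewrite -addnn; lia.
by rewrite !bin_small ?subr0 // ltnW.
Qed.

Lemma bal_diag (R : fieldType) i : bal R i i = 1.
Proof.
by rewrite /bal addnn odd_double doubleK binn bin_small // subr0.
Qed.

Fixpoint cpair (R : fieldType) (n : nat) : {poly R} * {poly R} :=
  match n with
  | 0 => (1, 'X)
  | m.+1 => let q := cpair R m in (q.2, 'X * q.2 - q.1)
  end.
Definition cp (R : fieldType) n := (cpair R n).1.

Lemma cpSS (R : fieldType) n : cp R n.+2 = 'X * cp R n.+1 - cp R n.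
Proof. by []. Qed.

Lemma cp_md (R : fieldType) n : monicdeg (cp R n) n.
Proof.
suff : monicdeg (cp R n) n /\ monicdeg (cp R n.+1) n.+1 by case.
elim: n => [|n [IH0 IH1]].
  split => k _; first by rewrite /cp /= coef1 eq_sym.
  by rewrite /cp /= coefX eq_sym.
split => // k hk; rewrite cpSS coefB coefXM.
case: k hk => [|k] // hk /=.
rewrite IH1 // IH0; last by apply: leq_trans (ltnW (ltnW hk)).
rewrite (@ltn_eqF n k.+1) ?subr0 //; by apply: leq_trans (ltnW hk).
Qed.

Definition LL (R : fieldType) (q : {poly R}) : R := Lf (ee R) q.

Lemma LXcp (R : fieldType) k i : LL ('X^k * cp R i) = bal R k i.
Proof.
suff H : forall i, (forall k, LL ('X^k * cp R i) = bal R k i) /\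
       (forall k, LL ('X^k * cp R i.+1) = bal R k i.+1) by case: (H i).
elim=> [|{}i [IH0 IH1]].
  split => k'; first by rewrite /cp /= mulr1 /LL Lf_Xn bal_0.
  by rewrite /cp /= -exprSr /LL Lf_Xn bal_1.
split => // k'.
by rewrite cpSS mulrBr mulrA -exprSr /LL Lf_sub -!/(LL _) IH1 IH0 bal_rec.
Qed.

Lemma LL_scale_mul (R : fieldType) a (p q : {poly R}) :
  LL ((a *: p) * q) = a * LL (p * q).
Proof. by rewrite -scalerAl /LL Lf_scale. Qed.

Lemma Lpp (R : fieldType) i j : LL (cp R i * cp R j) = (i == j)%:R.
Proof.
wlog hij : i j / (i <= j)%N.
  move=> H; case: (leqP i j) => h; first exact: H.
  by rewrite mulrC eq_sym; apply: H; exact: ltnW.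
rewrite {1}(@poly_expN _ (cp R i) i.+1) ?md_size ?cp_md //.
rewrite mulr_suml /LL Lf_sum big_ord_recr /=.
rewrite big1 ?add0r.
  rewrite -/(LL _) LL_scale_mul LXcp cp_md ?leqnn //.
  have -> : (i == i)%:R = 1 :> R by rewrite eqxx.
  rewrite mul1r.
  case: (ltngtP i j) hij => // h _; first by rewrite bal_lt.
  by rewrite h bal_diag.
move=> k _; rewrite -/(LL _) LL_scale_mul LXcp bal_lt ?mulr0 //=.
  by apply: leq_trans (ltn_ord k) hij.
exact: cp_md.
Qed.

Lemma Lp (R : fieldType) i : LL (cp R i) = (i == 0)%:R.
Proof. by rewrite -[cp R i]mulr1 -[1]/(cp R 0) Lpp. Qed.

Lemma Lam_shift (R : fieldType) (X c : R) (q : {poly R}) :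
  Lf (lam X c) (('X - c%:P) * q) = LL q.
Proof.
rewrite mulrBl mul_polyC Lf_sub Lf_scale Lf_shiftX /Lf /LL /Lf mulr_sumr -sumrB.
apply: eq_bigr => k _; rewrite lamS; ring.
Qed.

Lemma Lam_X (R : fieldType) (X c : R) (q : {poly R}) :
  Lf (lam X c) ('X * q) = LL q + c * Lf (lam X c) q.
Proof.
have -> : 'X * q = ('X - c%:P) * q + c *: q by rewrite -mul_polyC; ring.
by rewrite Lf_add Lam_shift Lf_scale.
Qed.

Lemma Lam_cp0 (R : fieldType) (X c : R) : Lf (lam X c) (cp R 0) = X.
Proof.
by rewrite -[cp R 0](expr0 'X) Lf_Xn /lam big_ord0 expr0 mulr1 addr0.
Qed.

Lemma Lam_cp1 (R : fieldType) (X c : R) : Lf (lam X c) (cp R 1) = c * X + 1.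
Proof.
rewrite -[cp R 1](expr1 'X) Lf_Xn lamS.
have -> : lam X c 0 = X by rewrite /lam big_ord0 expr0 mulr1 addr0.
by rewrite /ee /= /catalan /= bin0 divn1.
Qed.

Lemma Lam_cpSS (R : fieldType) (X c : R) i :
  Lf (lam X c) (cp R i.+2) = c * Lf (lam X c) (cp R i.+1) - Lf (lam X c) (cp R i).
Proof. by rewrite cpSS Lf_sub Lam_X Lp add0r. Qed.

Fixpoint tpair (R : fieldType) (b : R) (n : nat) : {poly R} * {poly R} :=
  match n with
  | 0 => (0, 1)
  | m.+1 => let q := tpair b m in (q.2, cp R m.+1 + b *: q.2 - q.1)
  end.
Definition ct (R : fieldType) (b : R) n := (tpair b n).1.

Lemma hornerSS (R : fieldType) (b : R) n :
  (cp R n.+2).[b] = b * (cp R n.+1).[b] - (cp R n).[b].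
Proof. by rewrite cpSS hornerD hornerN hornerM hornerX. Qed.

Lemma ct_eq (R : fieldType) (b : R) n :
  ('X - b%:P) * ct b n = cp R n - ((cp R n).[b])%:P.
Proof.
suff H : forall n, ('X - b%:P) * ct b n = cp R n - ((cp R n).[b])%:P /\
   ('X - b%:P) * ct b n.+1 = cp R n.+1 - ((cp R n.+1).[b])%:P by case: (H n).
elim=> [|{}n [IH0 IH1]].
  split; first by rewrite /ct /= mulr0 /cp /= hornerC subrr.
  by rewrite /ct /= mulr1 /cp /= hornerX.
split => //.
rewrite -[ct b n.+2]/(cp R n.+1 + b *: ct b n.+1 - ct b n).
rewrite mulrBr mulrDr -scalerAr IH1 IH0 cpSS hornerSS -cpSS -mul_polyC polyCB polyCM.
rewrite cpSS; ring.
Qed.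

Lemma ct_deg (R : fieldType) (b : R) n :
  (forall k, (n <= k)%N -> (ct b n)`_k = 0) /\ monicdeg (ct b n.+1) n.
Proof.
elim: n => [|n [A M]].
  split => k _; first by rewrite /ct /= coef0.
  by rewrite /ct /= coef1 eq_sym.
have A' : forall k, (n.+1 <= k)%N -> (ct b n.+1)`_k = 0.
  by move=> k hk; rewrite M ?ltn_eqF // ltnW.
split => // k hk.
rewrite -[ct b n.+2]/(cp R n.+1 + b *: ct b n.+1 - ct b n).
by rewrite coefB coefD coefZ A' // A ?(ltnW hk) // mulr0 addr0 subr0 cp_md.
Qed.

Definition sb (R : fieldType) (b c : R) j : {poly R} :=
  ('X - c%:P) * ct b j + ((cp R j).[b])%:P.

Lemma sb_md (R : fieldType) (b c : R) j : monicdeg (sb b c j) j.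
Proof.
case: j => [|j] k hk.
  by rewrite /sb /ct /= mulr0 add0r /cp /= hornerC coef1 eq_sym.
rewrite /sb coefD coefC; case: k hk => [|k] // hk /=.
rewrite addr0 mulrBl mul_polyC coefB coefXM coefZ /=.
have [A M] := ct_deg b j.
by rewrite M // (proj1 (ct_deg b j.+1)) // mulr0 subr0 eqSS.
Qed.

Lemma G_entry (R : fieldType) (X b c : R) i j :
  Lf (lam X c) (cp R i * sb b c j * ('X - b%:P))
  = (i == j)%:R + (c - b) * Lf (lam X c) (cp R i) * (cp R j).[b].
Proof.
set P := (cp R j).[b].
have -> : cp R i * sb b c j * ('X - b%:P) =
   ('X - c%:P) * (cp R i * (('X - b%:P) * ct b j))
   + P *: (('X - c%:P) * cp R i + (c - b) *: cp R i).
  by rewrite /sb -!mul_polyC polyCB; ring.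
rewrite ct_eq Lf_add Lam_shift Lf_scale Lf_add Lam_shift Lf_scale.
rewrite mulrBr [cp R i * P%:P]mulrC mul_polyC /LL Lf_sub Lf_scale -!/(LL _).
rewrite Lpp Lp; ring.
Qed.

Lemma det_basis (R : fieldType) n (Phi : {poly R} -> R)
  (Phisum : forall m (F : 'I_m -> {poly R}), Phi (\sum_(i < m) F i) = \sum_(i < m) Phi (F i))
  (Phiscale : forall a q, Phi (a *: q) = a * Phi q) (r s : nat -> {poly R})
  (hr : forall i, monicdeg (r i) i) (hs : forall j, monicdeg (s j) j) :
  \det (\matrix_(i < n, j < n) Phi (r i * s j))
  = \det (\matrix_(i < n, j < n) Phi ('X^i * 'X^j)).
Proof.
set M := \matrix_(i < n, j < n) Phi ('X^i * 'X^j).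
pose A := \matrix_(i < n, k < n) (r i)`_k.
pose B := \matrix_(l < n, j < n) (s j)`_l.
have -> : \matrix_(i < n, j < n) Phi (r i * s j) = A *m M *m B.
  apply/matrixP => i j; rewrite !mxE.
  have er : r i = \sum_(k < n) (r i)`_k *: 'X^k.
    by apply: poly_expN; apply: leq_trans (md_size (hr i)) (ltn_ord i).
  have es : s j = \sum_(k < n) (s j)`_k *: 'X^k.
    by apply: poly_expN; apply: leq_trans (md_size (hs j)) (ltn_ord j).
  rewrite [in LHS]er [in LHS]es mulr_suml Phisum.
  under [RHS]eq_bigr => l _ do rewrite mxE mulr_suml.
  rewrite [RHS]exchange_big /=; apply: eq_bigr => k _.
  rewrite mulr_sumr Phisum; apply: eq_bigr => l _.
  by rewrite -scalerAl -scalerAr !Phiscale !mxE; ring.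
rewrite !det_mulmx.
have dA : \det A = 1.
  rewrite det_trig; first by apply: big1 => i _; rewrite mxE hr // eqxx.
  by apply/is_trig_mxP => i j hij; rewrite mxE hr ?ltn_eqF // ltnW.
have dB : \det B = 1.
  rewrite -det_tr det_trig; first by apply: big1 => i _; rewrite !mxE hs // eqxx.
  by apply/is_trig_mxP => i j hij; rewrite !mxE hs ?ltn_eqF // ltnW.
by rewrite dA dB mul1r mulr1.
Qed.

Lemma seq_eq2 (R : fieldType) (f g : nat -> R) (k : R) :
  f 0 = g 0 -> f 1 = g 1 -> (forall i, f i.+2 = k * f i.+1 - f i) ->
  (forall i, g i.+2 = k * g i.+1 - g i) -> forall i, f i = g i.
Proof.
move=> h0 h1 hf hg.
suff H : forall i, f i = g i /\ f i.+1 = g i.+1 by move=> i; case: (H i).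
elim=> [|i [IH0 IH1]]; split => //.
by rewrite hf hg IH0 IH1.
Qed.

Lemma telesc (R : fieldType) (phi P : nat -> R) (c b X : R) :
  phi 0 = X -> phi 1 = c * X + 1 -> (forall i, phi i.+2 = c * phi i.+1 - phi i) ->
  P 0 = 1 -> P 1 = b -> (forall i, P i.+2 = b * P i.+1 - P i) ->
  forall m, 1 + \sum_(i < m.+1) P i * ((c - b) * phi i)
            = P m * phi m.+1 - P m.+1 * phi m.
Proof.
move=> f0 f1 fS P0 P1 PS; elim=> [|m IH].
  by rewrite big_ord_recr big_ord0 /= f0 f1 P0 P1; ring.
rewrite big_ord_recr /= addrA IH fS PS; ring.
Qed.

Lemma chebU0 (R : fieldType) (x : R) : chebU 0 x = 1. Proof. by []. Qed.
Lemma chebU1 (R : fieldType) (x : R) : chebU 1 x = 2%:R * x. Proof. by []. Qed.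
Lemma chebUSS (R : fieldType) (x : R) n :
  chebU n.+2 x = 2%:R * x * chebU n.+1 x - chebU n x.
Proof. by []. Qed.

Lemma PE (R : fieldType) (h2 : 2%:R != 0 :> R) (b : R) k :
  (cp R k).[b] = chebU k (b / 2%:R).
Proof.
have e : 2%:R * (b / 2%:R) = b by rewrite mulrC divfK.
apply: (@seq_eq2 _ (fun k => (cp R k).[b]) (fun k => chebU k (b / 2%:R)) b).
- by rewrite /cp /= -polyC1 hornerC.
- by rewrite /cp /= hornerX chebU1 e.
- by move=> i; rewrite hornerSS.
- by move=> i; rewrite chebUSS e.
Qed.

Lemma phiE (R : fieldType) (X a : R) k :
  Lf (lam X (- 2%:R * a)) (cp R k) = X * chebU k (- a) + chebUm1 k (- a).
Proof.
set c := - 2%:R * a.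
have e : 2%:R * (- a) = c by rewrite /c mulrN mulNr.
apply: (@seq_eq2 _ (fun k => Lf (lam X c) (cp R k))
          (fun k => X * chebU k (- a) + chebUm1 k (- a)) c).
- by rewrite Lam_cp0 chebU0 /= mulr1 addr0.
- by rewrite Lam_cp1 /= chebU1 chebU0 e mulrC.
- by move=> i; rewrite Lam_cpSS.
- move=> i /=; rewrite chebUSS e.
  have hU : chebU i.+1 (- a) = c * chebUm1 i.+1 (- a) - chebUm1 i (- a).
    case: i => [|i] /=; first by rewrite chebU1 chebU0 e mulr1 subr0.
    by rewrite chebUSS e.
  rewrite hU; ring.
Qed.

Unset Implicit Arguments.

Theorem theorem15 (R : fieldType) (h2 : 2%:R != 0 :> R) (X a b : R)
    (n : nat) (hn : (0 < n)%N) :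
  \det (\matrix_(i < n, j < n)
     (X * (- 2%:R * a) ^+ (i + j).+1
      + \sum_(k < ((i + j)./2).+1) (- 2%:R * a) ^+ (i + j - k.*2) * (catalan k)%:R
      - b * (X * (- 2%:R * a) ^+ (i + j)
             + \sum_(k < ((i + j).+1)./2)
                 (- 2%:R * a) ^+ ((i + j).-1 - k.*2) * (catalan k)%:R)))
  = chebUm1 n (b / 2%:R) * (X * chebU n (- a) + chebUm1 n (- a))
    - chebU n (b / 2%:R) * (X * chebUm1 n (- a) + chebUm1 n.-1 (- a)).
Proof.
case: n hn => [//|m] _.
rewrite -[RHS]/(chebU m (b / 2%:R) * (X * chebU m.+1 (- a) + chebUm1 m.+1 (- a))
   - chebU m.+1 (b / 2%:R) * (X * chebU m (- a) + chebUm1 m (- a))).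
rewrite -!phiE -!PE //.
set c := - 2%:R * a.
pose Phi q := Lf (lam X c) (q * ('X - b%:P)).
have PX N : Phi ('X^N) = lam X c N.+1 - b * lam X c N.
  by rewrite /Phi mulrBr -exprSr [_ * b%:P]mulrC mul_polyC Lf_sub Lf_scale !Lf_Xn.
have -> : \matrix_(i < m.+1, j < m.+1)
     (X * c ^+ (i + j).+1
      + \sum_(k < ((i + j)./2).+1) c ^+ (i + j - k.*2) * (catalan k)%:R
      - b * (X * c ^+ (i + j)
             + \sum_(k < ((i + j).+1)./2)
                 c ^+ ((i + j).-1 - k.*2) * (catalan k)%:R))
   = \matrix_(i < m.+1, j < m.+1) Phi ('X^i * 'X^j).
  by apply/matrixP => i j; rewrite !mxE -exprD PX.
have Phisum : forall k (F : 'I_k -> {poly R}), Phi (\sum_(i < k) F i) = \sum_(i < k) Phi (F i).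
  by move=> k F; rewrite /Phi mulr_suml Lf_sum.
have Phiscale : forall a0 q, Phi (a0 *: q) = a0 * Phi q.
  by move=> a0 q; rewrite /Phi -scalerAl Lf_scale.
rewrite -(@det_basis R m.+1 Phi Phisum Phiscale (cp R) (sb b c) (@cp_md R) (@sb_md R b c)).
have -> : \matrix_(i < m.+1, j < m.+1) Phi (cp R i * sb b c j)
   = 1%:M + (\col_(i < m.+1) ((c - b) * Lf (lam X c) (cp R i)))
            *m (\row_(j < m.+1) (cp R j).[b]).
  apply/matrixP => i j; rewrite !mxE big_ord1 !mxE /Phi G_entry.
  by [].
rewrite det_rank1 !mxE.
under eq_bigr => i _ do rewrite !mxE.
rewrite (@telesc R (fun i => Lf (lam X c) (cp R i)) (fun i => (cp R i).[b]) c b X) //.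
- exact: Lam_cp0.
- exact: Lam_cp1.
- by move=> i; rewrite Lam_cpSS.
- by rewrite /cp /= -polyC1 hornerC.
- by rewrite /cp /= hornerX.
- by move=> i; rewrite hornerSS.
Qed.
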